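(* The Lie algebra $\Lambda(\mathbb{Q}\mathrm{Tree})$ is not finitely generated. Furthermore, the Lie algebra $\Lambda(\mathbb{Q}\mathrm{Tree}^-)$ is not finitely generated either.
   Context: $\mathrm{Tree}((m))$, $m\ge1$, is the set of planar rooted trees with one root at the bottom and $m$ leaves at the top labeled $1,\dots,m$ from left to right, every internal vertex having at least two inputs; equivalently, meaningful ways of inserting parentheses into the word $12\cdots m$ (e.g. $\mathrm{Tree}((1))=\{1\}$, $\mathrm{Tree}((2))=\{(12)\}$, $\mathrm{Tree}((3))=\{((12)3),(1(23)),(123)\}$). Composition $S\circ_iT$ grafts the root of $T$ to the $i$-th leaf of $S$; this makes $\mathrm{Tree}$ a nonsymmetric operad of sets with unit the trivial tree $1$. For $c\in\mathrm{Tree}((m))$, $m\ge2$, the face $\partial_ic\in\mathrm{Tree}((m-1))$ is obtained by erasing the $i$-th leaf of $c$ (suppressing any vertex left with one input), e.g. $\partial_i((1(23))4)=((12)3)$ for $1\le i\le3$, $\partial_4((1(23))4)=(1(23))$. The operad $\mathrm{Tree}^-$ has $\mathrm{Tree}^-((0))=\{\circ\}$, $\mathrm{Tree}^-((m))=\mathrm{Tree}((m))$ for $m\ge1$, grafting compositions, and $c\circ_i\circ=\partial_ic$, $1\circ_1\circ=\circ$. For a nonsymmetric operad of sets $\mathcal{C}$, $\Lambda(\mathbb{Q}\mathcal{C})=\bigoplus_{m\ge0}\mathbb{Q}\mathcal{C}((m))$ with Lie bracket $[c,d]=\sum_{t=1}^{j}d\circ_tc-\sum_{s=1}^{k}c\circ_sd$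 for $c\in\mathcal{C}((k))$, $d\in\mathcal{C}((j))$, extended bilinearly. *)

(* Defs.v *)
From HB Require Import structures.
From mathcomp Require Import all_boot all_order all_algebra.
From mathcomp Require Import finmap.
From mathcomp Require Import monalg.
Set Implicit Arguments.
Unset Strict Implicit.
Unset Printing Implicit Defensive.
Import Order.TTheory GRing.Theory Num.Theory.

(* ordered list of inputs.  Leaves are numbered 1..m left to right.   *)
Inductive tree := Leaf | Node of seq tree.

Fixpoint tree_enc (t : tree) : GenTree.tree unit :=
  match t with
  | Leaf => GenTree.Leaf tt
  | Node cs => GenTree.Node 0 (map tree_enc cs)
  end.

Fixpoint tree_dec (g : GenTree.tree unit) : tree :=
  match g with
  | GenTree.Leaf _ => Leaf
  | GenTree.Node _ gs => Node (map tree_dec gs)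
  end.

Lemma tree_encK : cancel tree_enc tree_dec.
Proof.
rewrite /cancel; fix IH 1; case => [|cs] //=; congr Node.
elim: cs => //= c cs IHcs; by rewrite IH IHcs.
Qed.

HB.instance Definition _ := Countable.copy tree (can_type tree_encK).

Fixpoint leaves (t : tree) : nat :=
  match t with
  | Leaf => 1
  | Node cs => sumn (map leaves cs)
  end.

Fixpoint wf (t : tree) : bool :=
  match t with
  | Leaf => true
  | Node cs => (1 < size cs) && all wf cs
  end.

(* graft0 s i t : graft the root of t onto the leaf of s with 0-based index i *)
Fixpoint graft0 (s : tree) (i : nat) (t : tree) {struct s} : tree :=
  match s with
  | Leaf => if i == 0%N then t else Leaf
  | Node cs =>
      Node ((fix gl (cs : seq tree) (i : nat) {struct cs} : seq tree :=
               match cs with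
               | [::] => [::]
               | c :: cs' => if i < leaves c then graft0 c i t :: cs'
                             else c :: gl cs' (i - leaves c)%N
               end) cs i)
  end.

(* erase0 s i : erase the leaf with 0-based index i, suppressing every
   vertex left with a single input; None if the whole tree disappears *)
Fixpoint erase0 (s : tree) (i : nat) {struct s} : option tree :=
  match s with
  | Leaf => None
  | Node cs =>
      let cs' := (fix el (cs : seq tree) (i : nat) {struct cs} : seq tree :=
                    match cs with
                    | [::] => [::]
                    | c :: cs' =>
                        if i < leaves c then
                          match erase0 c i with
                          | None => cs'
                          | Some c' => c' :: cs'
                          end
                        else c :: el cs' (i - leaves c)%N
                    end) cs i in
      match cs' with
      | [:: c] => Some c
      | _ => Some (Node cs')
      end
  end.

Definition Tree := {t : tree | wf t}.

Definition Tree_leaf : Tree := exist (fun t => wf t) Leaf erefl.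

Definition Tree_arity (c : Tree) : nat := leaves (val c).

(* c o_i d (1-based i): grafting.  The result of grafting well-formed  *)
(* trees is well-formed, so [insubd] never falls back to its default.  *)
Definition Tree_comp (c : Tree) (i : nat) (d : Tree) : Tree :=
  insubd Tree_leaf (graft0 (val c) i.-1 (val d)).

(* face \partial_i c (1-based i), for c with at least 2 leaves *)
Definition Tree_face (i : nat) (c : Tree) : Tree :=
  insubd Tree_leaf (odflt Leaf (erase0 (val c) i.-1)).

(* Tree^- : None is the arity-0 element \circ, Some c is c in Tree((m)). *)
Definition TreeM := option Tree.

Definition TreeM_arity (c : TreeM) : nat :=
  match c with None => 0%N | Some c => Tree_arity c end.

Definition TreeM_comp (c : TreeM) (i : nat) (d : TreeM) : TreeM :=
  match c, d with
  | Some c, Some d => Some (Tree_comp c i d)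
  | Some c, None => if val c == Leaf then None      (* 1 o_1 \circ = \circ *)
                    else Some (Tree_face i c)       (* c o_i \circ = \partial_i c *)
  | None, _ => None   (* never used: \circ has arity 0 *)
  end.

(* Lambda(Q C) for a nonsymmetric operad of sets C given by its carrier *)
(* C, arity and partial compositions (1-based): formal finite           *)
(* Q-linear combinations of elements of C.                              *)
Local Open Scope ring_scope.
Definition Lam (C : choiceType) := {malg rat[C]}.

Definition lam_br_basis (C : choiceType) (ar : C -> nat)
    (comp : C -> nat -> C -> C) (c d : C) : Lam C :=
  \sum_(1 <= t < (ar d).+1) << comp d t c >>
  - \sum_(1 <= s < (ar c).+1) << comp c s d >>.

Definition lam_br (C : choiceType) (ar : C -> nat)
    (comp : C -> nat -> C -> C) (f g : Lam C) : Lam C :=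
  \sum_(c <- msupp f) \sum_(d <- msupp g)
     (f@_c * g@_d) *: lam_br_basis ar comp c d.

Inductive lie_gen (C : choiceType) (ar : C -> nat)
    (comp : C -> nat -> C -> C) (S : seq (Lam C)) : Lam C -> Prop :=
  | lie_gen_in x : x \in S -> lie_gen ar comp S x
  | lie_gen_0 : lie_gen ar comp S 0
  | lie_gen_add x y : lie_gen ar comp S x -> lie_gen ar comp S y ->
                      lie_gen ar comp S (x + y)
  | lie_gen_scale (a : rat) x : lie_gen ar comp S x -> lie_gen ar comp S (a *: x)
  | lie_gen_br x y : lie_gen ar comp S x -> lie_gen ar comp S y ->
                     lie_gen ar comp S (lam_br ar comp x y).

Definition lie_fin_gen (C : choiceType) (ar : C -> nat)
    (comp : C -> nat -> C -> C) : Prop :=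
  exists S : seq (Lam C), forall x : Lam C, lie_gen ar comp S x.

(* Main.v *)
Require Import Defs.
From mathcomp Require Import all_boot all_order all_algebra.
From mathcomp Require Import finmap monalg zify.
Set Implicit Arguments.
Unset Strict Implicit.
Unset Printing Implicit Defensive.
Import Order.TTheory GRing.Theory Num.Theory.

Fixpoint md (t : tree) : nat :=
  match t with
  | Leaf => 0
  | Node cs => maxn (size cs)
      ((fix mdl (cs : seq tree) : nat :=
         match cs with [::] => 0 | c :: cs' => maxn (md c) (mdl cs') end) cs)
  end.

Fixpoint mdl (cs : seq tree) : nat :=
  match cs with [::] => 0 | c :: cs' => maxn (md c) (mdl cs') end.

Lemma md_node cs : md (Node cs) = maxn (size cs) (mdl cs).
Proof. by []. Qed.

Fixpoint gl (t : tree) (cs : seq tree) (i : nat) : seq tree :=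
  match cs with
  | [::] => [::]
  | c :: cs' => if i < leaves c then graft0 c i t :: cs'
                else c :: gl t cs' (i - leaves c)%N
  end.

Lemma graft0_node cs i t : graft0 (Node cs) i t = Node (gl t cs i).
Proof.
congr Node; elim: cs i => [|c cs IH] i //=; case: ifP => // _; by rewrite IH.
Qed.

Fixpoint el (cs : seq tree) (i : nat) : seq tree :=
  match cs with
  | [::] => [::]
  | c :: cs' =>
      if i < leaves c then
        match erase0 c i with
        | None => cs'
        | Some c' => c' :: cs'
        end
      else c :: el cs' (i - leaves c)%N
  end.

Lemma erase0_node cs i : erase0 (Node cs) i =
  match el cs i with [:: c] => Some c | _ => Some (Node (el cs i)) end.
Proof.
rewrite /=; suff ->: (fix el (cs : seq tree) (i : nat) {struct cs} : seq tree :=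
                    match cs with
                    | [::] => [::]
                    | c :: cs' =>
                        if i < leaves c then
                          match erase0 c i with
                          | None => cs'
                          | Some c' => c' :: cs'
                          end
                        else c :: el cs' (i - leaves c)%N
                    end) cs i = el cs i by [].
elim: cs i => [|c cs IH] i //=; case: ifP => // _; by rewrite IH.
Qed.

Fixpoint allP (P : tree -> Prop) (cs : seq tree) : Prop :=
  match cs with [::] => True | c :: cs' => P c /\ allP P cs' end.

Lemma tree_ind2 (P : tree -> Prop) : P Leaf ->
  (forall cs, allP P cs -> P (Node cs)) -> forall t, P t.
Proof.
move=> HL HN; fix IH 1; case => [|cs]; [exact: HL | apply: HN].
elim: cs => [|c cs IHcs]; [exact: I | split; [exact: (IH c) | exact: IHcs]].
Qed.

Lemma md_graft t s i : md (graft0 s i t) <= maxn (md s) (md t).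
Proof.
elim/tree_ind2: s i => [|cs IH] i.
  rewrite /=; case: (i == 0%N); by rewrite /= ?leq_maxr.
rewrite graft0_node !md_node.
suff [-> H]: size (gl t cs i) = size cs /\ mdl (gl t cs i) <= maxn (mdl cs) (md t).
  by rewrite geq_max leq_max leq_maxl /= -maxnA leq_max H orbT.
elim: cs IH i => [|c cs IHcs] /=; first by move=> _ i.
move=> [IHc IH] i.
case: ifP => _ /=.
  split => //; have := IHc i; lia.
have [-> H] := IHcs IH (i - leaves c)%N; split => //; lia.
Qed.

Lemma md_erase s i t' : erase0 s i = Some t' -> md t' <= md s.
Proof.
elim/tree_ind2: s i t' => [|cs IH] i t' //.
rewrite erase0_node md_node.
suff [Hs H]: size (el cs i) <= size cs /\ mdl (el cs i) <= mdl cs.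
  case E: (el cs i) => [|c [|c2 l]] [<-]; rewrite ?md_node;
    rewrite E in Hs H; move: Hs H => /=; lia.
elim: cs IH i {t'} => [|c cs IHcs] /=; first by move=> _ i.
move=> [IHc IH] i.
case: ifP => _ /=.
  case E: (erase0 c i) => [c'|] /=.
    have := IHc _ _ E; split => //; lia.
  split; lia.
have [Hs H] := IHcs IH (i - leaves c)%N; split; lia.
Qed.

Definition mdT (c : Tree) := md (val c).
Definition mdM (c : TreeM) := match c with None => 0%N | Some c => mdT c end.

Lemma mdT_comp c i d : mdT (Tree_comp c i d) <= maxn (mdT c) (mdT d).
Proof.
rewrite /mdT /Tree_comp val_insubd; case: ifP => _ //; exact: md_graft.
Qed.

Lemma mdT_face i c : mdT (Tree_face i c) <= mdT c.
Proof.
rewrite /mdT /Tree_face val_insubd; case: ifP => _ //.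
case E: (erase0 (val c) i.-1) => [t'|] //=; exact: md_erase E.
Qed.

Lemma mdM_comp c i d : mdM (TreeM_comp c i d) <= maxn (mdM c) (mdM d).
Proof.
case: c d => [c|] [d|] //=; first exact: mdT_comp.
case: ifP => _ //=; rewrite maxn0; exact: mdT_face.
Qed.

Local Open Scope ring_scope.

Section Gen.
Variables (C : choiceType) (ar : C -> nat) (comp : C -> nat -> C -> C) (h : C -> nat).
Hypothesis hcomp : forall c i d, (h (comp c i d) <= maxn (h c) (h d))%N.

Definition small N (x : Lam C) := forall c, (N < h c)%N -> x@_c = 0.

Lemma U_small N e k : (h e <= N)%N -> (N < h k)%N -> (<< e >> : Lam C)@_k = 0.
Proof.
move=> He Hk; rewrite mcoeffU; case: eqP => // E; subst.
by move: (leq_ltn_trans He Hk); rewrite ltnn.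
Qed.

Lemma br_basis_small N c d : (h c <= N)%N -> (h d <= N)%N ->
  small N (lam_br_basis ar comp c d).
Proof.
move=> Hc Hd e He; rewrite /lam_br_basis mcoeffB !raddf_sum /=.
rewrite !big1 ?subr0 // => i _; apply/eqP; rewrite ?oppr_eq0; apply/eqP; apply: (@U_small N _ e _ He);
  apply: (leq_trans (hcomp _ _ _)); by rewrite geq_max Hc Hd.
Qed.

Lemma lie_gen_small S N : (forall s, s \in S -> small N s) ->
  forall x, lie_gen ar comp S x -> small N x.
Proof.
move=> HS x; elim => {x}.
- by move=> x /HS.
- by move=> c _; rewrite mcoeff0.
- by move=> x y _ Hx _ Hy c Hc; rewrite mcoeffD Hx // Hy // addr0.
- by move=> a x _ Hx c Hc; rewrite mcoeffZ Hx // mulr0.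
move=> x y _ Hx _ Hy e He; rewrite /lam_br raddf_sum /= big1 // => c _.
rewrite raddf_sum /= big1 // => d _; rewrite mcoeffZ.
case: (leqP (h c) N) => Hc; last by rewrite Hx // mul0r mul0r.
case: (leqP (h d) N) => Hd; last by rewrite (Hy d) // mulr0 mul0r.
by rewrite (@br_basis_small N) // mulr0.
Qed.

Lemma not_fin_gen : (forall N, exists c, (N < h c)%N) -> ~ lie_fin_gen ar comp.
Proof.
move=> Hex [S HS].
pose N := (\max_(s <- S) \max_(c <- msupp s) h c)%N.
have HSs : forall s, s \in S -> small N s.
  move=> s sS c Hc; apply: mcoeff_outdom; apply/negP => cs.
  have : (h c <= N)%N.
    rewrite /N (big_rem s sS) /= (big_rem c cs) /=.
    by rewrite -maxnA leq_maxl.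
  by rewrite leqNgt Hc.
have [c Hc] := Hex N.
have := lie_gen_small HSs (HS << c >>) Hc.
by rewrite mcoeffU eqxx /= => /eqP; rewrite oner_eq0.
Qed.
End Gen.

Lemma corolla_wf n : wf (Node (nseq n.+2 Leaf)).
Proof. by elim: n. Qed.

Lemma md_corolla n : md (Node (nseq n Leaf)) = n.
Proof.
rewrite md_node size_nseq; suff ->: mdl (nseq n Leaf) = 0%N by rewrite maxn0.
by elim: n => //= n ->.
Qed.

Lemma exT N : exists c : Tree, (N < mdT c)%N.
Proof.
exists (exist (fun t => wf t) _ (corolla_wf N)); change (N < md (Node (nseq N.+2 Leaf)))%N; by rewrite md_corolla.
Qed.

Theorem corollary6p5 :
  ~ lie_fin_gen Tree_arity Tree_comp /\ ~ lie_fin_gen TreeM_arity TreeM_comp.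
Proof.
split.
  apply: (@not_fin_gen _ _ _ mdT mdT_comp); exact: exT.
apply: (@not_fin_gen _ _ _ mdM mdM_comp) => N.
have [c Hc] := exT N; by exists (Some c).
Qed.
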